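(* Let $p\geq 6$ be even and $q\geq 5$. Label the vertices of $C_p\,\square\, C_q$ as $\omega_{i,j}$ ($i\in\{1,\dots,p\}$, $j\in\{1,\dots,q\}$), where $\omega_{i,j}\omega_{i',j'}$ is an edge iff either $i=i'$ and $j'\equiv j\pm1 \pmod q$, or $j=j'$ and $i'\equiv i\pm 1\pmod p$. Let $M$ be any perfect matching of $C_p\,\square\, C_q$ containing the edges $\omega_{i,1}\omega_{i+1,1}$ and $\omega_{i,6}\omega_{i+1,6}$ for every even $i\in\{1,\dots,p\}$, the edges $\omega_{i,2}\omega_{i+1,2}$ and $\omega_{i,5}\omega_{i+1,5}$ for every odd $i\in\{1,\dots,p\}$, and the edges $\omega_{i,3}\omega_{i,4}$ for every $i\in\{1,\dots,p\}$ (indices $i$ taken modulo $p$, and the second index $6$ read as $1$ when $q=5$). Such a perfect matching exists, and $M$ cannot be extended to a Hamiltonian cycle. In particular, $C_p\,\square\, C_q$ does not have the PMH--property.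
   Context: $C_n$ denotes the cycle on $n$ vertices and $C_p\,\square\, C_q$ the Cartesian product of two cycles. A perfect matching $M$ of a graph $G$ can be extended to a Hamiltonian cycle if there exists a perfect matching $N$ of $G$ such that $M\cup N$ is (the edge set of) a Hamiltonian cycle of $G$. A graph has the PMH--property if it admits at least one perfect matching and every perfect matching of it can be extended to a Hamiltonian cycle. *)

(* Defs.v *)
From mathcomp Require Import all_boot.
Set Implicit Arguments. Unset Strict Implicit. Unset Printing Implicit Defensive.

Section Graph.
Variables (T : finType) (e : rel T).

Definition edge_set : {set {set T}} :=
  [set [set x; y] | x in T, y in T & e x y].

Definition perfect_matching (M : {set {set T}}) : Prop :=
  M \subset edge_set /\ forall x : T, #|[set m in M | x \in m]| = 1.

Definition hamiltonian_cycle (c : seq T) : bool :=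
  [&& uniq c, size c == #|T|, 2 < size c & cycle e c].

Definition cycle_edges (c : seq T) : {set {set T}} :=
  [set [set xy.1; xy.2] | xy in zip c (rot 1 c)].

Definition extendable_to_ham (M : {set {set T}}) : Prop :=
  exists N, perfect_matching N /\
    exists c, hamiltonian_cycle c /\ M :|: N = cycle_edges c.

Definition PMH_property : Prop :=
  (exists M, perfect_matching M) /\
  forall M, perfect_matching M -> extendable_to_ham M.
End Graph.

(* C_p [] C_q : vertex (a, b) : 'I_p * 'I_q stands for the paper's
   omega_{a+1, b+1}. *)
Definition torus_adj (p q : nat) : rel ('I_p * 'I_q) := fun u v =>
  ((u.1 == v.1) && ((val v.2 == (u.2 + 1) %% q) || (val u.2 == (v.2 + 1) %% q)))
  || ((u.2 == v.2) && ((val v.1 == (u.1 + 1) %% p) || (val u.1 == (v.1 + 1) %% p))).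

(* The matching condition of the theorem, translated to 0-based indices:
   paper row i even  <-> a = i-1 odd; paper columns 1,2,3,4,5,6 <-> 0,1,2,3,4,(5 mod q). *)
Definition special_matching_cond (p q : nat) (M : {set {set ('I_p * 'I_q)}}) : Prop :=
  (forall (a a' : 'I_p) (j : 'I_q), val a' = (a + 1) %% p ->
     (odd a && ((val j == 0) || (val j == 5 %% q))) || (~~ odd a && ((val j == 1) || (val j == 4))) ->
     [set (a, j); (a', j)] \in M)
  /\
  (forall (a : 'I_p) (j j' : 'I_q), val j = 2 -> val j' = 3 -> [set (a, j); (a, j')] \in M).
Arguments special_matching_cond : clear implicits.
Arguments torus_adj : clear implicits.

(* Main.v *)
Require Import Defs.
From mathcomp Require Import all_boot.
Set Implicit Arguments. Unset Strict Implicit. Unset Printing Implicit Defensive.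

Section Walk.
Variable V : finType.
Variables (m n R L U D : V -> V) (par Z0 Z1 Z2 : pred V).
Hypothesis LR : forall x, L (R x) = x.
Hypothesis DU : forall x, D (U x) = x.
Hypothesis UD : forall x, U (D x) = x.
Hypothesis DR : forall x, D (R x) = R (D x).
Hypothesis UR : forall x, U (R x) = R (U x).
Hypothesis nadj : forall x, [\/ n x = R x, n x = L x, n x = U x | n x = D x].
Hypothesis ninv : forall x, n (n x) = x.
Hypothesis mn : forall x, m x <> n x.
Hypothesis parR : forall x, par (R x) = ~~ par x.
Hypothesis parU : forall x, par (U x) = par x.
Hypothesis parD : forall x, par (D x) = par x.
Hypothesis Z1R : forall x, Z1 x -> Z1 (R x).
Hypothesis Z0R : forall x, Z0 x -> Z0 (R x).
Hypothesis Z1U : forall x, Z1 x -> Z0 (U x).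
Hypothesis Z1D : forall x, Z1 x -> Z2 (D x).
Hypothesis Z0D : forall x, Z0 x -> Z1 (D x).
Hypothesis Z2U : forall x, Z2 x -> Z1 (U x).
Hypothesis mZ0 : forall x, Z0 x -> m x = if par x then R x else L x.
Hypothesis mZ1 : forall x, Z1 x -> m x = if par x then L x else R x.
Hypothesis mZ2 : forall x, Z2 x -> m x = D x.
Hypothesis dDR : forall x, D x <> R x.
Hypothesis dUR : forall x, U x <> R x.
Hypothesis dUD : forall x, U x <> D x.
Hypothesis dRR : forall x, x <> R (R x).

Definition Pst y := [exists w, [&& y == R w, Z1 w, ~~ par w & n (D w) != R (D w)]].
Definition Qst y := [&& Z0 y, ~~ par y, n y == D y, n (L (D y)) == L y & n (D (D y)) != R (D (D y))].

Lemma PstP y : reflect (exists w, [/\ y = R w, Z1 w, ~~ par w & n (D w) <> R (D w)]) (Pst y).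
Proof.
apply: (iffP existsP) => [[w /and4P [/eqP -> h1 h2 /eqP h3]]|[w [-> h1 h2 h3]]];
  exists w; first by split.
by rewrite eqxx h1 h2; apply/eqP.
Qed.

Lemma nD_portR w : Z1 w -> ~~ par w -> n (D w) <> R (D w) ->
  n (R w) <> D (R w) -> n (D (R w)) = R (D (R w)).
Proof.
move=> z1 pw h hy.
have z1y : Z1 (R w) by apply: Z1R.
case: (nadj (D (R w))) => // h'.
- by exfalso; apply: h; rewrite DR LR in h'; rewrite -[in LHS]h' ninv.
- by exfalso; apply: hy; rewrite UD in h'; rewrite -[in LHS]h' ninv.
- by exfalso; apply: (@mn (D (R w))); rewrite h' mZ2 //; apply: Z1D.
Qed.

Lemma step_P y : Pst y -> [\/ Pst (m (n y)), Qst (m (n y)) | exists2 x, Z2 x & m (n y) = m x].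
Proof.
case/PstP=> w [-> z1 pw h].
have z1y : Z1 (R w) by apply: Z1R.
have py : par (R w) by rewrite parR pw.
have my : m (R w) = w by rewrite mZ1 // py LR.
case: (nadj (R w)) => hn.
-
  have hp := nD_portR z1 pw h.
  have hnd : n (R w) <> D (R w) by rewrite hn => /esym; apply: dDR.
  have e1 := hp hnd.
  have z1r : Z1 (R (R w)) by apply: Z1R.
  have pr : ~~ par (R (R w)) by rewrite !parR pw.
  have e1' : n (R (D (R w))) = D (R w) by rewrite -e1 ninv.
  apply: Or31; rewrite hn mZ1 // (negbTE pr); apply/PstP; exists (R (R w)); split => //.
  rewrite [D (R (R w))]DR e1'; exact: dRR.
- by exfalso; apply: (@mn (R w)); rewrite hn my LR.
-
  have z0 : Z0 (U (R w)) by apply: Z1U.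
  have pu : par (U (R w)) by rewrite parU.
  have hnd : n (R w) <> D (R w) by rewrite hn; apply: dUD.
  have e1 := nD_portR z1 pw h hnd.
  set z := R (U (R w)).
  have ez : m (n (R w)) = z by rewrite hn mZ0 // pu.
  have Dz : D z = R (R w) by rewrite /z DR DU.
  have nRR : n (R (R w)) = z.
    case: (nadj (R (R w))) => // h'.
    + exfalso; apply: (@mn (R (R w))); rewrite h' mZ1 //; last by apply: Z1R.
      by rewrite parR py.
    + exfalso; rewrite LR in h'; move/(congr1 n): h'; rewrite ninv => h'; apply: (@dUR (R w)); by rewrite -hn h'.
    + by rewrite h' UR.
    + exfalso; rewrite DR in h'; move/(congr1 n): h'; rewrite ninv => h'.
      have e1' : n (R (D (R w))) = D (R w) by rewrite -e1 ninv.
      apply: (@dDR (R w)); by rewrite -e1' h'.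
  have nz : n z = R (R w) by rewrite -nRR ninv.
  have Lz : L z = U (R w) by rewrite /z LR.
  apply: Or32; rewrite ez /Qst Dz LR nz Lz -hn !eqxx Z0R //= parR pu /=.
  have e1' : n (R (D (R w))) = D (R w) by rewrite -e1 ninv.
  rewrite [D (R (R w))]DR e1'; apply/eqP; exact: dRR.
- apply: Or33; exists (D (R w)); last by rewrite hn.
  by apply: Z1D.
Qed.

Lemma step_Q y : Qst y -> Pst (m (n y)).
Proof.
case/and5P=> z0 py /eqP hn _ h.
have z1 : Z1 (D y) by apply: Z0D.
rewrite hn mZ1 // parD (negbTE py); apply/PstP; exists (D y); split => //.
- by rewrite parD.
- by apply/eqP.
Qed.

Lemma start_P y : Z2 y -> ~~ par y -> n y = U y -> Pst (m (n y)).
Proof.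
move=> z2 py hn.
have z1 : Z1 (U y) by apply: Z2U.
rewrite hn mZ1 // parU (negbTE py); apply/PstP; exists (U y); split => //.
- by rewrite parU.
- by rewrite DU hn; apply: dUR.
Qed.

Lemma Pst_layer y : Pst y -> Z1 y /\ par y.
Proof. by case/PstP=> w [-> z1 pw _]; rewrite Z1R // parR pw. Qed.

Lemma Qst_layer y : Qst y -> Z0 y /\ ~~ par y.
Proof. by case/and5P. Qed.
End Walk.

Section PM.
Variables (T : finType) (e : rel T).
Hypothesis eirr : irreflexive e.

Lemma edge_setP E : E \in edge_set e -> exists u v, [/\ E = [set u; v], e u v & u != v].
Proof.
case/imset2P=> u v _; rewrite inE => huv ->.
exists u, v; split=> //; apply/eqP=> uv; move: huv; by rewrite uv eirr.
Qed.

Variable M : {set {set T}}.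
Hypothesis HM : perfect_matching e M.

Lemma pm_edge x : exists y, [set x; y] \in M /\ x != y.
Proof.
case: HM => sub /(_ x) /eqP /cards1P [E hE].
have : E \in [set m in M | x \in m] by rewrite hE inE.
rewrite inE => /andP [EM xE].
have /edge_setP [u [v [EE euv uv]]] : E \in edge_set e by apply: (subsetP sub).
move: xE; rewrite EE !inE => /orP [] /eqP xE.
- by exists v; rewrite xE -EE.
- by exists u; rewrite xE setUC -EE eq_sym.
Qed.

Lemma pm_uniq x y z : [set x; y] \in M -> [set x; z] \in M -> y = z.
Proof.
move=> hy hz.
have : [set x; y] == [set x; z].
  case: HM => _ /(_ x) /eqP /cards1P [E hE].
  have h1 : [set x; y] \in [set m in M | x \in m] by rewrite inE hy !inE eqxx.
  have h2 : [set x; z] \in [set m in M | x \in m] by rewrite inE hz !inE eqxx.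
  by move: h1 h2; rewrite hE !inE => /eqP -> /eqP ->.
move/eqP=> E.
have zin : z \in [set x; y] by rewrite E !inE eqxx orbT.
have yin : y \in [set x; z] by rewrite -E !inE eqxx orbT.
move: zin yin; rewrite !inE => /orP [] /eqP -> //.
by case/orP=> /eqP ->.
Qed.

Definition mate x := odflt x [pick y | [set x; y] \in M].

Lemma mateP x : [set x; mate x] \in M.
Proof.
rewrite /mate; case: pickP => [y //|/= h].
by case: (pm_edge x) => y [hy _]; move: (h y); rewrite hy.
Qed.

Lemma mate_eq x y : [set x; y] \in M -> mate x = y.
Proof. by move=> h; apply: pm_uniq (mateP x) h. Qed.

Lemma mateK x : mate (mate x) = x.
Proof. by apply: mate_eq; rewrite setUC mateP. Qed.

Lemma mate_neq x : mate x != x.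
Proof.
case: (pm_edge x) => y [hy xy]; rewrite (mate_eq hy) eq_sym //.
Qed.

Lemma mate_adj x : e x (mate x) || e (mate x) x.
Proof.
case: HM => sub _.
have /edge_setP [u [v [EE euv uv]]] : [set x; mate x] \in edge_set e by apply: (subsetP sub); apply: mateP.
have xin : x \in [set u; v] by rewrite -EE !inE eqxx.
have min : mate x \in [set u; v] by rewrite -EE !inE eqxx orbT.
move: xin min; rewrite !inE => /orP [] /eqP xE /orP [] /eqP mE.
- by move: (mate_neq x); rewrite mE xE eqxx.
- by rewrite mE xE euv.
- by rewrite mE xE euv orbT.
- by move: (mate_neq x); rewrite mE xE eqxx.
Qed.
End PM.

Lemma zip_sub_rcons (T : eqType) (s : seq T) x z a :
  a \in zip (x :: s) s -> a \in zip (x :: s) (rcons s z).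
Proof.
elim: s x => [//|y s IH] x /=.
rewrite !inE => /orP [-> //|h]; by rewrite IH ?orbT.
Qed.

Lemma chain_const (T : eqType) (X : T -> Prop) (s : seq T) x :
  (forall a b, (a, b) \in zip (x :: s) s -> (X a <-> X b)) ->
  forall y, y \in x :: s -> (X y <-> X x).
Proof.
elim: s x => [|z s IH] x h y.
  by rewrite inE => /eqP ->.
rewrite inE => /orP [/eqP -> //|hy].
have hxz : X x <-> X z by apply: h; rewrite /= inE eqxx.
have h' : forall a b, (a, b) \in zip (z :: s) s -> (X a <-> X b).
  by move=> a b hab; apply: h; rewrite /= inE hab orbT.
have H := IH z h' y hy.
split=> Hy.
- by apply/hxz; apply/H.
- by apply/H; apply/hxz.
Qed.

Section Ham.
Variables (T : finType) (e : rel T).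
Hypothesis eirr : irreflexive e.
Variables (M N : {set {set T}}) (c : seq T).
Hypothesis HM : perfect_matching e M.
Hypothesis HN : perfect_matching e N.
Hypothesis Hc : hamiltonian_cycle e c.
Hypothesis HMN : M :|: N = cycle_edges c.

Lemma ham_all x : x \in c.
Proof.
case/and4P: Hc => u /eqP sz _ _.
have H : #|c| = #|T| by rewrite (card_uniqP u) sz.
have := subset_cardP H; rewrite subset_predT => /(_ isT) /(_ x).
by rewrite inE => ->.
Qed.

Lemma ham_closed (X : T -> Prop) :
  (forall x, X x -> X (mate M x)) -> (forall x, X x -> X (mate N x)) ->
  forall x0 x, X x0 -> X x.
Proof.
move=> hm hn.
have em : forall x, X x <-> X (mate M x).
  move=> x; split; first exact: hm.
  by move=> /hm; rewrite (mateK eirr HM).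
have en : forall x, X x <-> X (mate N x).
  move=> x; split; first exact: hn.
  by move=> /hn; rewrite (mateK eirr HN).
case/and4P: Hc => _ _ sz _.
case: c sz HMN (@ham_all) => [//|h s] _ hmn hall.
have step : forall a b, (a, b) \in zip (h :: s) s -> (X a <-> X b).
  move=> a b /(zip_sub_rcons h) hab.
  have : [set a; b] \in cycle_edges (h :: s).
    by apply/imsetP; exists (a, b); rewrite // rot1_cons.
  rewrite -hmn inE => /orP [] hE.
  - by rewrite -(mate_eq eirr HM hE).
  - by rewrite -(mate_eq eirr HN hE).
move=> x0 x h0.
have := chain_const step (hall x0) => /iffLR /(_ h0) hh.
by apply/(chain_const step (hall x)).
Qed.

Lemma ham_mn x : mate M x <> mate N x.
Proof.
move=> E.
pose X y := y = x \/ y = mate M x.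
have cl := @ham_closed X.
have hm : forall y, X y -> X (mate M y).
  by move=> y [->|->]; [right|left; rewrite (mateK eirr HM)].
have hn : forall y, X y -> X (mate N y).
  by move=> y [->|->]; [right; rewrite E|left; rewrite E (mateK eirr HN)].
have all : forall y, X y by move=> y; apply: (cl hm hn x); left.
case/and4P: Hc => u /eqP sz sz2 _.
have : #|T| <= 2.
  have : [set: T] \subset [set x; mate M x].
    by apply/subsetP=> y _; rewrite !inE; case: (all y) => ->; rewrite eqxx ?orbT.
  move/subset_leq_card; rewrite cardsT => /leq_trans; apply.
  by rewrite cards2; case: (_ != _).
by rewrite -sz leqNgt sz2.
Qed.
End Ham.

Section Cover.
Variables (T : finType) (m n : T -> T).
Hypothesis minv : forall x, m (m x) = x.
Hypothesis ninv : forall x, n (n x) = x.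
Hypothesis hcl : forall X : T -> Prop,
  (forall x, X x -> X (m x)) -> (forall x, X x -> X (n x)) -> forall x0 x, X x0 -> X x.

Lemma orbit_cover (S : pred T) y0 :
  (forall y, S y -> S (m (n y))) -> S y0 -> forall x, S x || S (m x).
Proof.
move=> hS h0.
pose g y := m (n y).
have ginj : injective g.
  by move=> a b /(congr1 m); rewrite /g !minv => /(congr1 n); rewrite !ninv.
pose A := [set y | S y].
have sub : g @: A \subset A.
  by apply/subsetP=> z /imsetP [y]; rewrite !inE => hy ->; apply: hS.
have eqA : g @: A = A.
  by apply/eqP; rewrite eqEcard sub (card_imset _ ginj) leqnn.
have surj : forall z, S z -> exists2 y, S y & z = g y.
  move=> z hz; have : z \in g @: A by rewrite eqA inE.
  by case/imsetP=> y; rewrite inE => hy ->; exists y.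
move=> x1; apply: (@hcl (fun x => S x || S (m x)) _ _ y0 x1); last by rewrite /= h0.
- by move=> x /orP [h|h]; apply/orP; [right; rewrite minv|left].
- move=> x /orP [h|h]; apply/orP.
  + by right; apply: hS.
  + case: (surj _ h) => y hy /(congr1 m); rewrite /g !minv => /(congr1 n).
    by rewrite ninv => ->; left.
Qed.
End Cover.

Lemma modn_addn_neq a k d : a < d -> 0 < k < d -> (a + k) %% d != a.
Proof.
move=> ad /andP [k0 kd]; apply/negP => /eqP E.
have : (a + k) %% d == (a + 0) %% d by rewrite E addn0 modn_small.
rewrite eqn_modDl mod0n modn_small //; by rewrite eqn0Ngt k0.
Qed.

Section Torus.
Variables (p q : nat).
Hypotheses (hp6 : 6 <= p) (hpe : ~~ odd p) (hq5 : 5 <= q).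
Local Notation V := ('I_p * 'I_q)%type.

Lemma p0 : 0 < p. Proof. exact: leq_trans _ hp6. Qed.
Lemma q0 : 0 < q. Proof. exact: leq_trans _ hq5. Qed.

Definition ordp k : 'I_p := Ordinal (ltn_pmod k p0).
Definition ordq k : 'I_q := Ordinal (ltn_pmod k q0).
Definition cR (x : V) : V := (ordp x.1.+1, x.2).
Definition cL (x : V) : V := (ordp (x.1 + p.-1), x.2).
Definition cU (x : V) : V := (x.1, ordq (x.2 + q.-1)).
Definition cD (x : V) : V := (x.1, ordq x.2.+1).
Definition par (x : V) := odd x.1.
Definition lay k (x : V) := val x.2 == k %% q.

Lemma pairE (x y : V) : val x.1 = val y.1 -> val x.2 = val y.2 -> x = y.
Proof. by case: x y => [a j] [b k] /= /val_inj -> /val_inj ->. Qed.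

Lemma cLR x : cL (cR x) = x.
Proof.
apply: pairE => //=; rewrite modnDml addSnnS prednK ?p0 // modnDr modn_small //.
Qed.
Lemma cRL x : cR (cL x) = x.
Proof.
apply: pairE => //=; rewrite -addn1 modnDml -addnA addn1 prednK ?p0 // modnDr modn_small //.
Qed.
Lemma cDU x : cD (cU x) = x.
Proof.
apply: pairE => //=; rewrite -addn1 modnDml -addnA addn1 prednK ?q0 // modnDr modn_small //.
Qed.
Lemma cUD x : cU (cD x) = x.
Proof.
apply: pairE => //=; rewrite modnDml addSnnS prednK ?q0 // modnDr modn_small //.
Qed.

Lemma oddp_mod k : odd (k %% p) = odd k.
Proof. by apply: odd_mod; apply/negbTE. Qed.

Lemma parR x : par (cR x) = ~~ par x.
Proof. by rewrite /par /= oddp_mod. Qed.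
Lemma parL x : par (cL x) = ~~ par x.
Proof.
rewrite /par /= oddp_mod oddD.
have : odd p.-1 by move: hpe; case: p p0 => //= n _; rewrite negbK.
by move=> ->; rewrite addbT.
Qed.

Lemma layD k x : lay k x -> lay k.+1 (cD x).
Proof. by rewrite /lay /= => /eqP ->; rewrite -addn1 modnDml addn1. Qed.
Lemma layU k x : lay k.+1 x -> lay k (cU x).
Proof.
rewrite /lay /= => /eqP ->; rewrite modnDml addSnnS prednK ?q0 // modnDr //.
Qed.

Lemma neqR x : (cR x).1 != x.1.
Proof.
apply/negP => /eqP /(congr1 val) /=; rewrite -addn1 => E.
have h : 0 < 1 < p by rewrite (leq_trans _ hp6).
by move: (modn_addn_neq (ltn_ord x.1) h); rewrite E eqxx.
Qed.
Lemma neqL x : (cL x).1 != x.1.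
Proof.
apply/negP => /eqP /(congr1 val) /= E.
have h : 0 < p.-1 < p by case: p hp6 => // n hn; rewrite /= ltnSn andbT; case: n hn.
by move: (modn_addn_neq (ltn_ord x.1) h); rewrite E eqxx.
Qed.
Lemma neqRR x : x != cR (cR x).
Proof.
apply/negP => /eqP /(congr1 (fun y => val y.1)) /=.
have mS : forall k, (k %% p).+1 %% p = k.+1 %% p by move=> k; rewrite -addn1 modnDml addn1.
rewrite mS -addn2 => E.
have h : 0 < 2 < p by rewrite (leq_trans _ hp6).
by move: (modn_addn_neq (ltn_ord x.1) h); rewrite -E eqxx.
Qed.
Lemma neqLL x : x != cL (cL x).
Proof.
apply/negP => /eqP /(congr1 (fun y => val y.1)) /=; rewrite modnDml -addnA => E.
have h : 0 < (p.-1 + p.-1) %% p < p.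
  rewrite ltn_pmod ?p0 // andbT.
  have -> : p.-1 + p.-1 = p.-2 + p by case: p hp6 => [|[|n]] //= _; rewrite addSnnS.
  by rewrite modnDr modn_small; case: p hp6 => [|[|[|n]]].
by move: (modn_addn_neq (ltn_ord x.1) h); rewrite modnDmr -E eqxx.
Qed.
Lemma neqUD x : (cU x).2 != (cD x).2.
Proof.
apply/negP => /eqP /(congr1 val) /= E.
have : (x.2 + q.-1 == x.2 + 1 %[mod q]) by rewrite E addn1.
rewrite eqn_modDl.
have h1 : 1 %% q = 1 by rewrite modn_small // (leq_trans _ hq5).
have h2 : q.-1 %% q = q.-1 by rewrite modn_small //; case: q hq5.
rewrite h1 h2.
by case: q hq5 => [|[|[|n]]].
Qed.

Lemma dUR x : cU x <> cR x.
Proof. by move=> /(congr1 fst) E; move: (neqR x); rewrite -E eqxx. Qed.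
Lemma dDR x : cD x <> cR x.
Proof. by move=> /(congr1 fst) E; move: (neqR x); rewrite -E eqxx. Qed.
Lemma dUL x : cU x <> cL x.
Proof. by move=> /(congr1 fst) E; move: (neqL x); rewrite -E eqxx. Qed.
Lemma dDL x : cD x <> cL x.
Proof. by move=> /(congr1 fst) E; move: (neqL x); rewrite -E eqxx. Qed.
Lemma dUD x : cU x <> cD x.
Proof. by move=> /(congr1 snd) E; move: (neqUD x); rewrite E eqxx. Qed.
Lemma dDU x : cD x <> cU x.
Proof. by move=> E; apply: (dUD (esym E)). Qed.
Lemma dRR x : x <> cR (cR x).
Proof. by move=> E; move: (neqRR x); rewrite -E eqxx. Qed.
Lemma dLL x : x <> cL (cL x).
Proof. by move=> E; move: (neqLL x); rewrite -E eqxx. Qed.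

Lemma adj_cases u v : torus_adj p q u v ->
  [\/ v = cR u, v = cL u, v = cU u | v = cD u].
Proof.
case/orP=> /andP [/eqP e /orP [] /eqP h].
- by apply: Or44; apply: pairE => /=; [rewrite e|rewrite h addn1].
- have E : u = cD v by apply: pairE => /=; [rewrite e|rewrite h addn1].
  by apply: Or43; rewrite E cUD.
- by apply: Or41; apply: pairE => /=; [rewrite h addn1|rewrite e].
- have E : u = cR v by apply: pairE => /=; [rewrite h addn1|rewrite e].
  by apply: Or42; rewrite E cLR.
Qed.

Lemma adj_irr : irreflexive (torus_adj p q).
Proof.
move=> x; apply/negP => /adj_cases [] E.
- by move: (neqR x); rewrite -E eqxx.
- by move: (neqL x); rewrite -E eqxx.
- have E' : cD x = x by rewrite {1}E cDU.
  by move: (neqUD x); rewrite E' -E eqxx.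
- have E' : cU x = x by rewrite {1}E cUD.
  by move: (neqUD x); rewrite E' -E eqxx.
Qed.


Section Main.
Variables (M N : {set {set V}}) (c : seq V).
Hypotheses (HM : perfect_matching (torus_adj p q) M) (HN : perfect_matching (torus_adj p q) N).
Hypotheses (Hc : hamiltonian_cycle (torus_adj p q) c) (HMN : M :|: N = cycle_edges c).
Hypothesis HS : special_matching_cond p q M.

Local Notation m := (mate M).
Local Notation n := (mate N).

Lemma minv x : m (m x) = x. Proof. exact (@mateK _ _ adj_irr M HM x). Qed.
Lemma ninv x : n (n x) = x. Proof. exact (@mateK _ _ adj_irr N HN x). Qed.
Lemma mn x : m x <> n x. Proof. exact (@ham_mn _ _ adj_irr M N c HM HN Hc HMN x). Qed.
Lemma hcl (X : V -> Prop) : (forall x, X x -> X (m x)) -> (forall x, X x -> X (n x)) ->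
  forall x0 x, X x0 -> X x.
Proof. exact (@ham_closed _ _ adj_irr M N c HM HN Hc HMN X). Qed.

Lemma nadj x : [\/ n x = cR x, n x = cL x, n x = cU x | n x = cD x].
Proof.
have := (@mate_adj _ _ adj_irr N HN x).
case/orP => /adj_cases [] E.
- exact: Or41.
- exact: Or42.
- exact: Or43.
- exact: Or44.
- by apply: Or42; rewrite {2}E cLR.
- by apply: Or41; rewrite {2}E cRL.
- by apply: Or44; rewrite {2}E cDU.
- by apply: Or43; rewrite {2}E cUD.
Qed.

Lemma q1 : 1 %% q = 1. Proof. by rewrite modn_small // (leq_trans _ hq5). Qed.
Lemma q2 : 2 %% q = 2. Proof. by rewrite modn_small // (leq_trans _ hq5). Qed.
Lemma q3 : 3 %% q = 3. Proof. by rewrite modn_small // (leq_trans _ hq5). Qed.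
Lemma q4 : 4 %% q = 4. Proof. by rewrite modn_small // (leq_trans _ hq5). Qed.

Lemma m_horiz x s : (forall y : V, y.2 = x.2 -> odd y.1 = s -> [set y; cR y] \in M) ->
  m x = if odd x.1 == s then cR x else cL x.
Proof.
move=> h; case: eqP => e.
- by apply: (mate_eq adj_irr HM); apply: h.
- apply: (mate_eq adj_irr HM); rewrite setUC -{2}[x]cRL; apply: h => //.
  by rewrite -/(par _) parL /par; case: (odd x.1) e; case: s.
Qed.

Lemma HS1 (y : V) : (odd y.1 && ((val y.2 == 0) || (val y.2 == 5 %% q))) ||
     (~~ odd y.1 && ((val y.2 == 1) || (val y.2 == 4))) -> [set y; cR y] \in M.
Proof.
case: HS => h _ hc; case: y hc => a j hc.
by apply: (h a (ordp a.+1) j) => //=; rewrite addn1.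
Qed.

Lemma m_lay0 x : lay 0 x -> m x = if par x then cR x else cL x.
Proof.
move=> hl; rewrite (m_horiz (s := true)); first by rewrite eqb_id.
move=> y e o; apply: HS1; rewrite o e; by move: hl; rewrite /lay mod0n => ->.
Qed.
Lemma m_lay5 x : lay 5 x -> m x = if par x then cR x else cL x.
Proof.
move=> hl; rewrite (m_horiz (s := true)); first by rewrite eqb_id.
move=> y e o; apply: HS1; rewrite o e; move: hl; rewrite /lay => ->; by rewrite orbT.
Qed.
Lemma m_lay1 x : lay 1 x -> m x = if par x then cL x else cR x.
Proof.
move=> hl; rewrite (m_horiz (s := false)); first by rewrite eqbF_neg /par; case: (odd x.1).
move=> y e o; apply: HS1; rewrite o e; move: hl; rewrite /lay q1 => ->; by rewrite orbT.
Qed.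
Lemma m_lay4 x : lay 4 x -> m x = if par x then cL x else cR x.
Proof.
move=> hl; rewrite (m_horiz (s := false)); first by rewrite eqbF_neg /par; case: (odd x.1).
move=> y e o; apply: HS1; rewrite o e; move: hl; rewrite /lay q4 => ->; by rewrite !orbT.
Qed.
Lemma m_lay2 x : lay 2 x -> m x = cD x.
Proof.
move=> hl; apply: (mate_eq adj_irr HM); case: HS => _ h.
case: x hl => a j hl; apply: h; first by move: hl; rewrite /lay q2 => /eqP.
by move: (layD hl); rewrite /lay q3 => /eqP.
Qed.
Lemma m_lay3 x : lay 3 x -> m x = cU x.
Proof.
move=> hl; apply: (mate_eq adj_irr HM); rewrite setUC -{2}[x]cDU; case: HS => _ h.
have hl2 := layU hl.
case: (cU x) hl2 => a j hl2; apply: h; first by move: hl2; rewrite /lay q2 => /eqP.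
by move: (layD hl2); rewrite /lay q3 => /eqP.
Qed.


Definition npar (x : V) := ~~ par x.
Lemma cDR x : cD (cR x) = cR (cD x). Proof. by []. Qed.
Lemma cUR x : cU (cR x) = cR (cU x). Proof. by []. Qed.
Lemma cDL x : cD (cL x) = cL (cD x). Proof. by []. Qed.
Lemma cUL x : cU (cL x) = cL (cU x). Proof. by []. Qed.
Lemma parU x : par (cU x) = par x. Proof. by []. Qed.
Lemma parD x : par (cD x) = par x. Proof. by []. Qed.
Lemma nparU x : npar (cU x) = npar x. Proof. by []. Qed.
Lemma nparD x : npar (cD x) = npar x. Proof. by []. Qed.
Lemma nparR x : npar (cR x) = ~~ npar x. Proof. by rewrite /npar parR. Qed.
Lemma nparL x : npar (cL x) = ~~ npar x. Proof. by rewrite /npar parL. Qed.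
Lemma layR k x : lay k x -> lay k (cR x). Proof. by []. Qed.
Lemma layL k x : lay k x -> lay k (cL x). Proof. by []. Qed.
Lemma nadjL x : [\/ n x = cL x, n x = cR x, n x = cU x | n x = cD x].
Proof. by case: (nadj x) => E; [apply: Or42|apply: Or41|apply: Or43|apply: Or44]. Qed.
Lemma nadjB x : [\/ n x = cR x, n x = cL x, n x = cD x | n x = cU x].
Proof. by case: (nadj x) => E; [apply: Or41|apply: Or42|apply: Or44|apply: Or43]. Qed.
Lemma nadjLB x : [\/ n x = cL x, n x = cR x, n x = cD x | n x = cU x].
Proof. by case: (nadj x) => E; [apply: Or42|apply: Or41|apply: Or44|apply: Or43]. Qed.
Lemma m_lay0L x : lay 0 x -> m x = if npar x then cL x else cR x.
Proof. by move/m_lay0 => ->; rewrite /npar; case: (par x). Qed.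
Lemma m_lay1L x : lay 1 x -> m x = if npar x then cR x else cL x.
Proof. by move/m_lay1 => ->; rewrite /npar; case: (par x). Qed.
Lemma m_lay5L x : lay 5 x -> m x = if npar x then cL x else cR x.
Proof. by move/m_lay5 => ->; rewrite /npar; case: (par x). Qed.
Lemma m_lay4L x : lay 4 x -> m x = if npar x then cR x else cL x.
Proof. by move/m_lay4 => ->; rewrite /npar; case: (par x). Qed.

Definition PR := Pst n cR cD par (lay 1).
Definition QR := Qst n cR cL cD par (lay 0).
Definition PL := Pst n cL cD npar (lay 1).
Definition QL := Qst n cL cR cD npar (lay 0).
Definition PRb := Pst n cR cU par (lay 4).
Definition QRb := Qst n cR cL cU par (lay 5).
Definition PLb := Pst n cL cU npar (lay 4).
Definition QLb := Qst n cL cR cU npar (lay 5).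

Lemma stepPR y : PR y -> [\/ PR (m (n y)), QR (m (n y)) | exists2 x, lay 2 x & m (n y) = m x].
Proof.
move: y; exact (step_P cLR cDU cUD cDR cUR nadj ninv mn parR parU (@layR 1) (@layR 0) (@layU 0) (@layD 1)
  m_lay0 m_lay1 m_lay2 dDR dUR dUD dRR).
Qed.
Lemma stepPL y : PL y -> [\/ PL (m (n y)), QL (m (n y)) | exists2 x, lay 2 x & m (n y) = m x].
Proof.
move: y; exact (step_P cRL cDU cUD cDL cUL nadjL ninv mn nparL nparU (@layL 1) (@layL 0) (@layU 0) (@layD 1)
  m_lay0L m_lay1L m_lay2 dDL dUL dUD dLL).
Qed.
Lemma stepPRb y : PRb y -> [\/ PRb (m (n y)), QRb (m (n y)) | exists2 x, lay 3 x & m (n y) = m x].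
Proof.
move: y; exact (step_P cLR cUD cDU cUR cDR nadjB ninv mn parR parD (@layR 4) (@layR 5) (@layD 4) (@layU 3)
  m_lay5 m_lay4 m_lay3 dUR dDR dDU dRR).
Qed.
Lemma stepPLb y : PLb y -> [\/ PLb (m (n y)), QLb (m (n y)) | exists2 x, lay 3 x & m (n y) = m x].
Proof.
move: y; exact (step_P cRL cUD cDU cUL cDL nadjLB ninv mn nparL nparD (@layL 4) (@layL 5) (@layD 4) (@layU 3)
  m_lay5L m_lay4L m_lay3 dUL dDL dDU dLL).
Qed.
Lemma stepQR y : QR y -> PR (m (n y)).
Proof. move: y; exact (step_Q parD (@layD 0) m_lay1). Qed.
Lemma stepQL y : QL y -> PL (m (n y)).
Proof. move: y; exact (step_Q nparD (@layD 0) m_lay1L). Qed.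
Lemma stepQRb y : QRb y -> PRb (m (n y)).
Proof. move: y; exact (step_Q parU (@layU 4) m_lay4). Qed.
Lemma stepQLb y : QLb y -> PLb (m (n y)).
Proof. move: y; exact (step_Q nparU (@layU 4) m_lay4L). Qed.
Lemma startPR y : lay 2 y -> ~~ par y -> n y = cU y -> PR (m (n y)).
Proof. move: y; exact (start_P cDU parU (@layU 1) m_lay1 dUR). Qed.
Lemma startPL y : lay 2 y -> ~~ npar y -> n y = cU y -> PL (m (n y)).
Proof. move: y; exact (start_P cDU nparU (@layU 1) m_lay1L dUL). Qed.
Lemma startPRb y : lay 3 y -> ~~ par y -> n y = cD y -> PRb (m (n y)).
Proof. move: y; exact (start_P cUD parD (@layD 3) m_lay4 dDR). Qed.
Lemma startPLb y : lay 3 y -> ~~ npar y -> n y = cD y -> PLb (m (n y)).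
Proof. move: y; exact (start_P cUD nparD (@layD 3) m_lay4L dDL). Qed.


Definition S1 y := [|| lay 2 y, lay 3 y, PR y, QR y, PL y, QL y, PRb y, QRb y, PLb y | QLb y].

Lemma S1_step y : S1 y -> S1 (m (n y)).
Proof.
rewrite {1}/S1 => /orP [h2 | /orP [h3 | /orP [h | /orP [h | /orP [h | /orP [h | /orP [h | /orP [h | /orP [h | h]]]]]]]]].
- case: (nadj y) => E.
  + have h := layR h2; rewrite E m_lay2 //.
    by rewrite /S1 (@layD 2 _ h) orbT.
  + have h := layL h2; rewrite E m_lay2 //.
    by rewrite /S1 (@layD 2 _ h) orbT.
  + case py : (par y).
    * have := startPL h2 _ E; rewrite /npar py => /(_ isT) h.
      by rewrite /S1 h !orbT.
    * have := startPR h2 _ E; rewrite py => /(_ isT) h.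
      by rewrite /S1 h !orbT.
  + by exfalso; apply: (@mn y); rewrite E m_lay2.
- case: (nadj y) => E.
  + have h := layR h3; rewrite E m_lay3 //.
    by rewrite /S1 (@layU 2 _ h).
  + have h := layL h3; rewrite E m_lay3 //.
    by rewrite /S1 (@layU 2 _ h).
  + by exfalso; apply: (@mn y); rewrite E m_lay3.
  + case py : (par y).
    * have := startPLb h3 _ E; rewrite /npar py => /(_ isT) h.
      by rewrite /S1 h !orbT.
    * have := startPRb h3 _ E; rewrite py => /(_ isT) h.
      by rewrite /S1 h !orbT.
- case: (stepPR h) => [h'|h'|[x h2 ->]]; first by rewrite /S1 h' !orbT.
  + by rewrite /S1 h' !orbT.
  + by rewrite m_lay2 // /S1 (@layD 2 _ h2) orbT.
- by move: (stepQR h) => h'; rewrite /S1 h' !orbT.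
- case: (stepPL h) => [h'|h'|[x h2 ->]]; first by rewrite /S1 h' !orbT.
  + by rewrite /S1 h' !orbT.
  + by rewrite m_lay2 // /S1 (@layD 2 _ h2) orbT.
- by move: (stepQL h) => h'; rewrite /S1 h' !orbT.
- case: (stepPRb h) => [h'|h'|[x h3 ->]]; first by rewrite /S1 h' !orbT.
  + by rewrite /S1 h' !orbT.
  + by rewrite m_lay3 // /S1 (@layU 2 _ h3).
- by move: (stepQRb h) => h'; rewrite /S1 h' !orbT.
- case: (stepPLb h) => [h'|h'|[x h3 ->]]; first by rewrite /S1 h' !orbT.
  + by rewrite /S1 h' !orbT.
  + by rewrite m_lay3 // /S1 (@layU 2 _ h3).
- by move: (stepQLb h) => h'; rewrite /S1 h' !orbT.
Qed.


Lemma cover x : S1 x || S1 (m x).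
Proof.
have h0 : S1 (ordp 0, ordq 2) by rewrite /S1 /lay /= eqxx.
move: x; exact (orbit_cover minv ninv hcl S1_step h0).
Qed.

Lemma lPR y : PR y -> lay 1 y /\ par y. Proof. move: y; exact (Pst_layer parR (@layR 1)). Qed.
Lemma lPL y : PL y -> lay 1 y /\ npar y. Proof. move: y; exact (Pst_layer nparL (@layL 1)). Qed.
Lemma lPRb y : PRb y -> lay 4 y /\ par y. Proof. move: y; exact (Pst_layer parR (@layR 4)). Qed.
Lemma lPLb y : PLb y -> lay 4 y /\ npar y. Proof. move: y; exact (Pst_layer nparL (@layL 4)). Qed.
Lemma lQR y : QR y -> lay 0 y. Proof. by case/Qst_layer. Qed.
Lemma lQL y : QL y -> lay 0 y. Proof. by case/Qst_layer. Qed.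
Lemma lQRb y : QRb y -> lay 5 y. Proof. by case/Qst_layer. Qed.
Lemma lQLb y : QLb y -> lay 5 y. Proof. by case/Qst_layer. Qed.

Lemma lay_num i j y : lay i y -> lay j y -> i %% q = j %% q.
Proof. by rewrite /lay => /eqP <- /eqP. Qed.

Lemma q5c : (5 %% q = 0 /\ q = 5) \/ 5 %% q = 5.
Proof.
case: (ltngtP q 5) => h.
- by move: h; rewrite ltnNge hq5.
- by right; rewrite modn_small.
- by left; rewrite h modnn.
Qed.

Lemma S1_lay1 w : lay 1 w -> S1 w -> PR w || PL w.
Proof.
move=> h1 /orP [h | /orP [h | /orP [h | /orP [h | /orP [h | /orP [h | /orP [h | /orP [h | /orP [h | h]]]]]]]]].
- by move: (lay_num h1 h); rewrite q1 q2.
- by move: (lay_num h1 h); rewrite q1 q3.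
- by rewrite h.
- by move: (lay_num h1 (lQR h)); rewrite q1 mod0n.
- by rewrite h orbT.
- by move: (lay_num h1 (lQL h)); rewrite q1 mod0n.
- by move: (lay_num h1 (lPRb h).1); rewrite q1 q4.
- by move: (lay_num h1 (lQRb h)); rewrite q1; case: q5c => [[->]|->].
- by move: (lay_num h1 (lPLb h).1); rewrite q1 q4.
- by move: (lay_num h1 (lQLb h)); rewrite q1; case: q5c => [[->]|->].
Qed.

Lemma S1_lay4 w : lay 4 w -> S1 w -> PRb w || PLb w.
Proof.
move=> h1 /orP [h | /orP [h | /orP [h | /orP [h | /orP [h | /orP [h | /orP [h | /orP [h | /orP [h | h]]]]]]]]].
- by move: (lay_num h1 h); rewrite q4 q2.
- by move: (lay_num h1 h); rewrite q4 q3.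
- by move: (lay_num h1 (lPR h).1); rewrite q1 q4.
- by move: (lay_num h1 (lQR h)); rewrite q4 mod0n.
- by move: (lay_num h1 (lPL h).1); rewrite q1 q4.
- by move: (lay_num h1 (lQL h)); rewrite q4 mod0n.
- by rewrite h.
- by move: (lay_num h1 (lQRb h)); rewrite q4; case: q5c => [[->]|->].
- by rewrite h orbT.
- by move: (lay_num h1 (lQLb h)); rewrite q4; case: q5c => [[->]|->].
Qed.

Lemma S1_lay0 w : lay 0 w -> S1 w -> [|| QR w, QL w, QRb w | QLb w].
Proof.
move=> h1 /orP [h | /orP [h | /orP [h | /orP [h | /orP [h | /orP [h | /orP [h | /orP [h | /orP [h | h]]]]]]]]].
- by move: (lay_num h1 h); rewrite q2 mod0n.
- by move: (lay_num h1 h); rewrite q3 mod0n.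
- by move: (lay_num h1 (lPR h).1); rewrite q1 mod0n.
- by rewrite h.
- by move: (lay_num h1 (lPL h).1); rewrite q1 mod0n.
- by rewrite h orbT.
- by move: (lay_num h1 (lPRb h).1); rewrite q4 mod0n.
- by rewrite h !orbT.
- by move: (lay_num h1 (lPLb h).1); rewrite q4 mod0n.
- by rewrite h !orbT.
Qed.

Definition factA (x : V) := (n x = cD x /\ n (m x) = cD (m x)) \/
   (q = 5 /\ n x = cU x /\ n (m x) = cU (m x)).

Lemma factA_S1 y : lay 0 y -> S1 y -> factA y.
Proof.
move=> h0 /(S1_lay0 h0) /orP [h | /orP [h | /orP [h | h]]].
- case/and5P: h => _ py /eqP e1 /eqP e2 _; left; split => //.
  rewrite m_lay0 // (negbTE py) cDL -e2 ninv //.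
- case/and5P: h => _ py /eqP e1 /eqP e2 _; left; split => //.
  move: py; rewrite /npar negbK => py.
  rewrite m_lay0 // py cDR -e2 ninv //.
- have h5 := lQRb h.
  have qq : q = 5 by move: (lay_num h0 h5); rewrite mod0n; case: q5c => [[_ ->]|->].
  case/and5P: h => _ py /eqP e1 /eqP e2 _; right; split => //; split => //.
  rewrite m_lay0 // (negbTE py) cUL -e2 ninv //.
- have h5 := lQLb h.
  have qq : q = 5 by move: (lay_num h0 h5); rewrite mod0n; case: q5c => [[_ ->]|->].
  case/and5P: h => _ py /eqP e1 /eqP e2 _; right; split => //; split => //.
  move: py; rewrite /npar negbK => py.
  rewrite m_lay0 // py cUR -e2 ninv //.
Qed.

Lemma lay0_m x : lay 0 x -> lay 0 (m x).
Proof. by move=> h; rewrite m_lay0 //; case: (par x). Qed.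

Lemma factA_all x : lay 0 x -> factA x.
Proof.
move=> h0; case/orP: (cover x) => h.
- exact: factA_S1.
- have := factA_S1 (lay0_m h0) h; rewrite /factA minv.
  by case=> [[a b]|[a [b d]]]; [left|right].
Qed.


Lemma factB x : lay 2 x -> n x = cR x -> par x.
Proof.
move=> h2 E; apply/negPn/negP => px.
have h1 : lay 1 (cU x) := @layU 1 _ h2.
have pw : ~~ par (cU x) by [].
case/orP: (cover (cU x)) => h.
- case/orP: (S1_lay1 h1 h) => h'.
  + by move: (lPR h').2; rewrite (negbTE pw).
  + case/PstP: h' => w' [e1 _ _ e2].
    have ew : w' = cR (cU x) by rewrite e1 cRL.
    by apply: e2; rewrite ew cDR cDU cLR -E ninv.
- have hm : m (cU x) = cR (cU x) by rewrite m_lay1 // (negbTE pw).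
  rewrite hm in h.
  case/orP: (S1_lay1 (layR h1) h) => h'.
  + case/PstP: h' => w' [e1 _ _ e2].
    have ew : w' = cU x by rewrite -[w']cLR -e1 cLR.
    by apply: e2; rewrite ew cDU.
  + by move: (lPL h').2; rewrite /npar parR negbK (negbTE pw).
Qed.

Lemma factB' x : lay 3 x -> n x = cR x -> par x.
Proof.
move=> h3 E; apply/negPn/negP => px.
have h4 : lay 4 (cD x) := @layD 3 _ h3.
have pw : ~~ par (cD x) by [].
case/orP: (cover (cD x)) => h.
- case/orP: (S1_lay4 h4 h) => h'.
  + by move: (lPRb h').2; rewrite (negbTE pw).
  + case/PstP: h' => w' [e1 _ _ e2].
    have ew : w' = cR (cD x) by rewrite e1 cRL.
    by apply: e2; rewrite ew cUR cUD cLR -E ninv.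
- have hm : m (cD x) = cR (cD x) by rewrite m_lay4 // (negbTE pw).
  rewrite hm in h.
  case/orP: (S1_lay4 (layR h4) h) => h'.
  + case/PstP: h' => w' [e1 _ _ e2].
    have ew : w' = cD x by rewrite -[w']cLR -e1 cLR.
    by apply: e2; rewrite ew cUD.
  + by move: (lPLb h').2; rewrite /npar parR negbK (negbTE pw).
Qed.

Definition tp (v : V) : V := (v.1, ordq 0).

Lemma tp_lay1 v : lay 1 v -> cU v = tp v.
Proof.
rewrite /lay => /eqP h; apply: pairE => //=.
by rewrite h modnDml add1n prednK ?q0 // modnn mod0n.
Qed.
Lemma tp_lay0 v : lay 0 (tp v). Proof. by rewrite /lay /= mod0n. Qed.
Lemma tp_q5 v : q = 5 -> lay 3 v -> cU (tp v) = cD v.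
Proof.
move=> qq; rewrite /lay => /eqP h; apply: pairE => //=.
by rewrite h qq.
Qed.

Lemma final_contra : False.
Proof.
pose X v := lay 1 v \/ (lay 0 v /\ n v = cD v) \/ ((lay 2 v \/ lay 3 v) /\ n (tp v) = cU (tp v)).
have hm : forall v, X v -> X (m v).
  move=> v [h1|[[h0 E]|[[h2|h3] E]]].
  - by left; rewrite m_lay1 //; case: (par v).
  - right; left; split; first exact: lay0_m.
    case: (factA_all h0) => [[_ ->] //|[_ [E' _]]].
    by exfalso; apply: (@dUD v); rewrite -E' E.
  - by right; right; rewrite m_lay2 //; split => //; right; apply: (@layD 2).
  - by right; right; rewrite m_lay3 //; split => //; left; apply: (@layU 2).
have hn : forall v, X v -> X (n v).
  move=> v [h1|[[h0 E]|[[h2|h3] E]]].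
  - case: (nadj v) => F.
    + by left; rewrite F.
    + by left; rewrite F.
    + right; left; rewrite F; split; first exact: (@layU 0).
      by rewrite -F ninv F cDU.
    + right; right; rewrite F; split; first by left; apply: (@layD 1).
      rewrite [tp (cD v)]/tp /= -/(tp v) -tp_lay1 //.
      case: (factA_all (@layU 0 _ h1)) => [[E' _]|[_ [E' _]]] //.
      exfalso; rewrite cDU in E'; have := congr1 n E'; rewrite ninv => E''.
      by apply: (@dUD v); rewrite E'' F.
  - by left; rewrite E; apply: (@layD 0).
  - case: (nadj v) => F.
    + right; right; rewrite F; split; first by left.
      have pv := factB h2 F.
      have hm0 : m (tp v) = cR (tp v) by rewrite m_lay0 ?tp_lay0 //; rewrite /par /= in pv *; rewrite pv.
      case: (factA_all (tp_lay0 v)) => [[E' _]|[_ [_ E']]].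
      * by exfalso; apply: (@dUD (tp v)); rewrite -E -E'.
      * by rewrite hm0 in E'; rewrite -E'.
    + right; right; rewrite F; split; first by left.
      have pv : par (cL v) by apply: factB; [exact: layL|rewrite -F ninv F cRL].
      have hm0 : m (tp v) = cL (tp v).
        by rewrite m_lay0 ?tp_lay0 //; move: pv; rewrite parL /par /= => /negbTE ->.
      case: (factA_all (tp_lay0 v)) => [[E' _]|[_ [_ E']]].
      * by exfalso; apply: (@dUD (tp v)); rewrite -E -E'.
      * by rewrite hm0 in E'; rewrite -E'.
    + by left; rewrite F; apply: (@layU 1).
    + by exfalso; apply: (@mn v); rewrite F m_lay2.
  - case: (nadj v) => F.
    + right; right; rewrite F; split; first by right.
      have pv := factB' h3 F.
      have hm0 : m (tp v) = cR (tp v) by rewrite m_lay0 ?tp_lay0 //; rewrite /par /= in pv *; rewrite pv.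
      case: (factA_all (tp_lay0 v)) => [[E' _]|[_ [_ E']]].
      * by exfalso; apply: (@dUD (tp v)); rewrite -E -E'.
      * by rewrite hm0 in E'; rewrite -E'.
    + right; right; rewrite F; split; first by right.
      have pv : par (cL v) by apply: factB'; [exact: layL|rewrite -F ninv F cRL].
      have hm0 : m (tp v) = cL (tp v).
        by rewrite m_lay0 ?tp_lay0 //; move: pv; rewrite parL /par /= => /negbTE ->.
      case: (factA_all (tp_lay0 v)) => [[E' _]|[_ [_ E']]].
      * by exfalso; apply: (@dUD (tp v)); rewrite -E -E'.
      * by rewrite hm0 in E'; rewrite -E'.
    + by exfalso; apply: (@mn v); rewrite F m_lay3.
    + exfalso.
      case: (factA_all (tp_lay0 v)) => [[E' _]|[qq [E' _]]].
      * by apply: (@dUD (tp v)); rewrite -E -E'.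
      * rewrite (tp_q5 qq h3) -F in E'.
        have := congr1 n E'; rewrite !ninv => vt.
        have l0 := tp_lay0 v; rewrite vt in l0.
        by move: (lay_num h3 l0); rewrite q3 mod0n.
have h1 : X (ordp 0, ordq 1) by left; rewrite /lay.
have := hcl hm hn (ordp 0, ordq 4) h1.
rewrite /X /lay /= q4 q1 q2 q3 mod0n.
by case=> [//|[[//]|[[//|//] _]]].
Qed.

End Main.

Definition sL (x : V) := (val x.2 == 0) || (val x.2 == 5 %% q).
Definition mate0 (x : V) : V :=
  if val x.2 == 2 then cD x else if val x.2 == 3 then cU x
  else if odd x.1 == sL x then cR x else cL x.

Lemma mate0K x : mate0 (mate0 x) = x.
Proof.
have hq : forall k, k < 5 -> k %% q = k by move=> k hk; rewrite modn_small // (leq_trans hk).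
case: (boolP (val x.2 == 2)) => h2.
  have -> : mate0 x = cD x by rewrite /mate0 h2.
  have e3 : val (cD x).2 = 3 by rewrite /= (eqP h2) hq.
  by rewrite /mate0 e3 /= cUD.
case: (boolP (val x.2 == 3)) => h3.
  have -> : mate0 x = cU x by rewrite /mate0 (negbTE h2) h3.
  have e2 : val (cU x).2 = 2.
    by rewrite /= (eqP h3) addSnnS prednK ?q0 // modnDr hq.
  by rewrite /mate0 e2 /= cDU.
case: (boolP (odd x.1 == sL x)) => hs.
- have -> : mate0 x = cR x by rewrite /mate0 (negbTE h2) (negbTE h3) hs.
  have e : sL (cR x) = sL x by [].
  rewrite /mate0 /= (negbTE h2) (negbTE h3) e.
  have -> : odd (ordp x.1.+1) == sL x = false.
    by move: (parR x); rewrite /par /= => ->; move: hs; case: (odd x.1); case: (sL x).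
  by rewrite cLR.
- have -> : mate0 x = cL x by rewrite /mate0 (negbTE h2) (negbTE h3) (negbTE hs).
  have e : sL (cL x) = sL x by [].
  rewrite /mate0 /= (negbTE h2) (negbTE h3) e.
  have -> : odd (ordp (x.1 + p.-1)) == sL x.
    by move: (parL x); rewrite /par /= => ->; move: hs; case: (odd x.1); case: (sL x).
  by rewrite cRL.
Qed.

Lemma adjR x : torus_adj p q x (cR x).
Proof. by apply/orP; right; apply/andP; split => //; apply/orP; left; rewrite /= addn1. Qed.
Lemma adjL x : torus_adj p q x (cL x).
Proof.
apply/orP; right; apply/andP; split => //; apply/orP; right.
by have := congr1 (fun y => val y.1) (cRL x); rewrite /= addn1 => ->.
Qed.
Lemma adjD x : torus_adj p q x (cD x).
Proof. by apply/orP; left; apply/andP; split => //; apply/orP; left; rewrite /= addn1. Qed.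
Lemma adjU x : torus_adj p q x (cU x).
Proof.
apply/orP; left; apply/andP; split => //; apply/orP; right.
by have := congr1 (fun y => val y.2) (cDU x); rewrite /= addn1 => ->.
Qed.

Lemma mate0_adj x : torus_adj p q x (mate0 x).
Proof.
rewrite /mate0; case: ifP => _; first exact: adjD.
case: ifP => _; first exact: adjU.
case: ifP => _; [exact: adjR|exact: adjL].
Qed.

Definition M0 : {set {set V}} := [set [set x; mate0 x] | x : V].

Lemma M0_pm : perfect_matching (torus_adj p q) M0.
Proof.
split.
- apply/subsetP => E /imsetP [x _ ->].
  by apply/imset2P; exists x (mate0 x) => //; rewrite inE mate0_adj.
- move=> x; apply/eqP/cards1P; exists [set x; mate0 x]; apply/setP => E.
  rewrite !inE; apply/andP/eqP.
  + case=> /imsetP [y _ ->]; rewrite !inE => /orP [] /eqP ->; first by [].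
    by rewrite mate0K setUC.
  + by move=> ->; split; [apply/imsetP; exists x|rewrite !inE eqxx].
Qed.

Lemma M0_special : special_matching_cond p q M0.
Proof.
split.
- move=> a a' j ha' hc.
  have e : (a', j) = cR (a, j) by apply: pairE => //=; rewrite ha' addn1.
  apply/imsetP; exists (a, j) => //; rewrite e /mate0 /=.
  have q5' : 5 %% q = 0 \/ 5 %% q = 5 by case: q5c => [[-> _]|->]; [left|right].
  case/orP: hc => /andP [oa hj].
  + have s1 : sL (a, j) by [].
    rewrite s1 oa.
    have -> : (val j == 2) = false by case/orP: hj => /eqP ->; case: q5' => e5; rewrite ?e5.
    by have -> : (val j == 3) = false by case/orP: hj => /eqP ->; case: q5' => e5; rewrite ?e5.
  + have s0 : sL (a, j) = false.
      by rewrite /sL /=; case/orP: hj => /eqP ->; case: q5' => e5; rewrite ?e5.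
    rewrite s0 (negbTE oa).
    have -> : (val j == 2) = false by case/orP: hj => /eqP ->.
    by have -> : (val j == 3) = false by case/orP: hj => /eqP ->.
- move=> a j j' h2 h3; apply/imsetP; exists (a, j) => //.
  rewrite /mate0 /= h2 eqxx; congr [set _; _].
  by apply: pairE => //=; rewrite h2 h3 modn_small // (leq_trans _ hq5).
Qed.

End Torus.

Theorem mainTheorem4 (p q : nat) :
  6 <= p -> ~~ odd p -> 5 <= q ->
  (exists M, perfect_matching (torus_adj p q) M /\ special_matching_cond p q M) /\
  (forall M, perfect_matching (torus_adj p q) M -> special_matching_cond p q M ->
     ~ extendable_to_ham (torus_adj p q) M) /\
  ~ PMH_property (torus_adj p q).
Proof.
move=> hp6 hpe hq5.
have ex : exists M, perfect_matching (torus_adj p q) M /\ special_matching_cond p q M.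
  by exists (M0 hp6 hq5); split; [apply: M0_pm|apply: M0_special].
have ne : forall M, perfect_matching (torus_adj p q) M -> special_matching_cond p q M ->
     ~ extendable_to_ham (torus_adj p q) M.
  move=> M HM HS [N [HN [c [Hc HMN]]]].
  exact: (final_contra hp6 hpe hq5 HM HN Hc HMN HS).
split; first exact: ex.
split; first exact: ne.
case=> _ H; case: ex => M [HM HS].
exact: (ne M HM HS (H M HM)).
Qed.
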